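(* Let $(V,\ell)$, $h_1$, and the sequence $(u_k)_{k\geq0}$ be as in the context, and suppose there is $\alpha>0$ with $\sum_{i=1}^\infty\frac{\|\ell_i\|}{i!}\leq\alpha$. Then for every $k\geq1$, $\frac{\|u_k\|}{k!}\leq\|u_1\|^k(\|h_1\|\alpha)^{k-1}C_k$, where $C_1=1$ and $C_k=\sum_{i=2}^k\sum_{r_1+\cdots+r_i=k}C_{r_1}\cdots C_{r_i}$ for $k\geq2$ (sum over tuples of positive integers).
   Context: $(V,\ell)$ is an $L_\infty$-algebra (graded symmetric degree-1 multilinear maps $\ell_k$, $\ell_0=0$, satisfying the $L_\infty$ Jacobi identities) with finite-dimensional components, $V_0=\mathbb{R}^n$, and $h_1:V_1\to V_0$, $h_2:V_2\to V_1$ are linear maps with $\ell_1\circ h_1+h_2\circ\ell_1=\mathrm{id}_{V_1}$. Norms are fixed on $V_0$ and $V_1$; $\|h_1\|$ is the operator norm and $\|\ell_i\|$ the operator norm of $\ell_i:V_0^{\times i}\to V_1$. Given $u_1\in\ker(\ell_1|_{V_0})$, set $u_0=0$ and $u_{k+1}=-h_1\big(\sum_{i=2}^{k+1}\sum_{r_1+\cdots+r_i=k+1,\,r_j\geq1}\frac{(k+1)!}{r_1!\cdots r_i!}\frac1{i!}\ell_i(u_{r_1},\ldots,u_{r_i})\big)$ for $k\geq1$. *)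

(* Defs.v *)
From HB Require Import structures.
From mathcomp Require Import all_boot all_order all_fingroup all_algebra.
From mathcomp Require Import all_classical all_reals all_analysis.
Set Implicit Arguments. Unset Strict Implicit. Unset Printing Implicit Defensive.
Import Order.TTheory GRing.Theory Num.Theory.
Local Open Scope ring_scope.
Local Open Scope classical_set_scope.

Section Linf.
Variables (R : realType) (V : lmodType R).

(* A Z-graded vector space is modelled by its total space V together with the
   family of homogeneous subspaces Vd d (d : int). *)
Definition is_subspace (P : V -> Prop) : Prop :=
  P 0 /\ forall (a : R) x y, P x -> P y -> P (a *: x + y).

Definition finite_dim (P : V -> Prop) : Prop :=
  exists b : seq V, (forall v, v \in b -> P v) /\
    forall x, P x -> exists a : nat -> R, x = \sum_(i < size b) a i *: b`_i.

Definition graded_fd (Vd : int -> V -> Prop) : Prop :=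
  [/\ forall d, is_subspace (Vd d),
      forall d, finite_dim (Vd d),
      forall v, exists (s : seq int) (c : int -> V),
          (forall d, Vd d (c d)) /\ v = \sum_(d <- s) c d
    &
      forall (s : seq int) (c : int -> V), uniq s -> (forall d, Vd d (c d)) ->
          \sum_(d <- s) c d = 0 -> forall d, d \in s -> c d = 0].

Definition is_Rn (P : V -> Prop) (n : nat) : Prop :=
  exists e : 'I_n -> V, [/\ forall j, P (e j),
    forall x, P x -> exists a : 'I_n -> R, x = \sum_j a j *: e j
  & forall a : 'I_n -> R, \sum_j a j *: e j = 0 -> forall j, a j = 0].

(* Koszul sign of the permutation s acting on homogeneous elements of
   degrees d: x_{s 0} (x) ... (x) x_{s (k-1)} = ksign s d * x_0 (x) ... *)
Definition ksign (k : nat) (s : 'S_k) (d : 'I_k -> int) : R :=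
  \prod_(a : 'I_k) \prod_(b : 'I_k | (a < b)%N && (s b < s a)%N)
     (-1) ^+ (odd `|d (s a)|%N && odd `|d (s b)|%N).

Definition unshuffle (k i : nat) (s : 'S_k) : bool :=
  [forall a : 'I_k, forall b : 'I_k,
     ((a < b)%N && ((b < i)%N || (i <= a)%N)) ==> (s a < s b)%N].

Definition upd (k : nat) (x : 'I_k -> V) (j : 'I_k) (y : V) : 'I_k -> V :=
  fun i => if i == j then y else x i.

(* L_infinity algebra (shifted convention: all brackets of degree 1,
   graded symmetric) on the graded space (V, Vd). *)
Definition is_Linfty (Vd : int -> V -> Prop) (l : forall k, ('I_k -> V) -> V)
  : Prop :=
  [/\
      forall k (x : 'I_k -> V) (j : 'I_k) (a : R) (y z : V),
        l k (upd x j (a *: y + z)) = a *: l k (upd x j y) + l k (upd x j z),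
      forall k (d : 'I_k -> int) (x : 'I_k -> V), (forall j, Vd (d j) (x j)) ->
        Vd ((\sum_j d j) + 1) (l k x),
      forall k (d : 'I_k -> int) (x : 'I_k -> V) (s : 'S_k),
        (forall j, Vd (d j) (x j)) ->
        l k (fun a => x (s a)) = ksign s d *: l k x,
      forall x : 'I_0 -> V, l 0 x = 0
    &
      forall n (d : 'I_n.+1 -> int) (x : 'I_n.+1 -> V),
        (forall j, Vd (d j) (x j)) ->
        let xs (s : 'S_n.+1) (m : nat) := x (s (inord m)) in
        \sum_(1 <= i < n.+2)
          \sum_(s : 'S_n.+1 | unshuffle i s)
            ksign s d *:
              l (n.+1 - i).+1 (fun a : 'I_(n.+1 - i).+1 =>
                 if (a == 0 :> nat) then l i (fun b : 'I_i => xs s b)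
                 else xs s (i + a - 1)%N) = 0].

(* compositions of m into i positive parts (entries bounded by m) *)
Definition compo (m i : nat) (r : {ffun 'I_i -> 'I_m.+1}) : bool :=
  [forall j, (0 < r j)%N] && ((\sum_j (r j : nat))%N == m).

(* the recursion defining u_{m} (m >= 2) from s = [:: u_0; ...; u_{m-1}] *)
Definition unext (l : forall k, ('I_k -> V) -> V) (h1 : V -> V)
    (s : seq V) (m : nat) : V :=
  - h1 (\sum_(2 <= i < m.+1) \sum_(r : {ffun 'I_i -> 'I_m.+1} | compo r)
        ((m`!)%:R / (\prod_j ((r j)`!))%:R / (i`!)%:R) *:
          l i (fun j => nth 0 s (r j))).

Fixpoint useq (l : forall k, ('I_k -> V) -> V) (h1 : V -> V) (u1 : V) (k : nat)
  : seq V :=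
  match k with
  | 0 => [:: 0]
  | 1 => [:: 0; u1]
  | k'.+1 => let s := useq l h1 u1 k' in rcons s (unext l h1 s k)
  end.

Definition useqn l h1 u1 (k : nat) : V := nth 0 (useq l h1 u1 k) k.

(* operator norm of l_i : V_0^i -> V_1 (extended real, +oo if unbounded) *)
Definition opnorm_l (Vd : int -> V -> Prop) (N0 N1 : V -> R)
  (l : forall k, ('I_k -> V) -> V) (i : nat) : \bar R :=
  ereal_sup [set (N1 (l i x))%:E |
     x in [set x : 'I_i -> V | forall j, Vd 0 (x j) /\ N0 (x j) <= 1]].

Definition opnorm_h (Vd : int -> V -> Prop) (N0 N1 : V -> R) (h1 : V -> V)
  : \bar R :=
  ereal_sup [set (N0 (h1 v))%:E | v in [set v | Vd 1 v /\ N1 v <= 1]].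

Definition is_norm_on (P : V -> Prop) (N : V -> R) : Prop :=
  [/\ forall x, P x -> N x = 0 -> x = 0,
      forall (a : R) x, P x -> N (a *: x) = `|a| * N x
    & forall x y, P x -> P y -> N (x + y) <= N x + N y].

End Linf.

Definition Cnext (s : seq nat) (m : nat) : nat :=
  \sum_(2 <= i < m.+1) \sum_(r : {ffun 'I_i -> 'I_m.+1} | compo r)
      \prod_j nth 0 s (r j).

Fixpoint Cseq (k : nat) : seq nat :=
  match k with
  | 0 => [:: 0]
  | 1 => [:: 0; 1]
  | k'.+1 => let s := Cseq k' in rcons s (Cnext s k)
  end.

Definition Cnum (k : nat) : nat := nth 0 (Cseq k) k.

(* Main.v *)
Require Import Defs.
From HB Require Import structures.
From mathcomp Require Import all_boot all_order all_fingroup all_algebra.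
From mathcomp Require Import all_classical all_reals all_analysis.
From mathcomp Require Import zify ring lra.
Import Order.TTheory GRing.Theory Num.Theory.
Local Open Scope ring_scope.
Set Implicit Arguments. Unset Strict Implicit. Unset Printing Implicit Defensive.
Section ML.
Variables (R : realType) (V : lmodType R) (l : forall k, ('I_k -> V) -> V).
Hypothesis Hml : forall k (x : 'I_k -> V) (j : 'I_k) (a : R) (y z : V),
        l (upd x j (a *: y + z)) = a *: l (upd x j y) + l (upd x j z).

Lemma l_upd0 k (x : 'I_k -> V) j : l (upd x j 0) = 0.
Proof.
have := Hml x j 1 0 0; rewrite !scale1r addr0 => h.
by apply: (addrI (l (upd x j 0))); rewrite addr0 -h.
Qed.

Lemma upd_same k (x : 'I_k -> V) j : upd x j (x j) = x.
Proof. by apply: funext => i; rewrite /upd; case: eqP => // ->. Qed.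

Lemma l_slot0 k (f : 'I_k -> V) j : f j = 0 -> l f = 0.
Proof. by move=> hj; rewrite -(upd_same f j) hj l_upd0. Qed.

Lemma l_updZ k (x : 'I_k -> V) j a y : l (upd x j (a *: y)) = a *: l (upd x j y).
Proof. by have := Hml x j a y 0; rewrite addr0 l_upd0 addr0. Qed.

Lemma l_scale k (c : 'I_k -> R) (x : 'I_k -> V) :
  l (fun j => c j *: x j) = (\prod_j c j) *: l x.
Proof.
suff H : forall s : seq 'I_k, uniq s ->
  l (fun j => if j \in s then c j *: x j else x j) = (\prod_(j <- s) c j) *: l x.
  have := H _ (index_enum_uniq 'I_k).
  have -> : (fun j => if j \in index_enum 'I_k then c j *: x j else x j) = (fun j => c j *: x j).
    by apply: funext => j; rewrite mem_index_enum.
  by [].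
elim=> [|j0 s IH] /=.
  move=> _; rewrite big_nil scale1r; congr (l _); apply: funext => j; by rewrite in_nil.
case/andP=> nj0 us.
have -> : (fun j => if j \in j0 :: s then c j *: x j else x j) =
   upd (fun j => if j \in s then c j *: x j else x j) j0 (c j0 *: x j0).
  apply: funext => j; rewrite /upd in_cons; case: eqP => [->|] //=.
rewrite l_updZ.
have -> : upd (fun j => if j \in s then c j *: x j else x j) j0 (x j0) =
   (fun j => if j \in s then c j *: x j else x j).
  apply: funext => j; rewrite /upd; case: eqP => [->|] //; by rewrite (negbTE nj0).
by rewrite IH // big_cons scalerA.
Qed.
End ML.
Section Gen.
Variables (R : realType) (V : lmodType R).

Lemma sub0 (P : V -> Prop) : is_subspace P -> P 0.
Proof. by case. Qed.
Lemma subD (P : V -> Prop) x y : is_subspace P -> P x -> P y -> P (x + y).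
Proof. by case=> _ H hx hy; have := H 1 x y hx hy; rewrite scale1r. Qed.
Lemma subZ (P : V -> Prop) a x : is_subspace P -> P x -> P (a *: x).
Proof. by case=> H0 H hx; have := H a x 0 hx H0; rewrite addr0. Qed.
Lemma subN (P : V -> Prop) x : is_subspace P -> P x -> P (- x).
Proof. by move=> hP hx; rewrite -scaleN1r; apply: subZ. Qed.
Lemma subsum (P : V -> Prop) (I : Type) (r : seq I) (Q : pred I) (F : I -> V) :
  is_subspace P -> (forall i, Q i -> P (F i)) -> P (\sum_(i <- r | Q i) F i).
Proof.
move=> hP hF; elim/big_ind: _ => //; first exact: sub0.
by move=> x y; apply: subD.
Qed.

Lemma norm0 (P : V -> Prop) N : is_subspace P -> is_norm_on P N -> N 0 = 0.
Proof.
move=> hP [_ hZ _]; have := hZ 0 0 (sub0 hP).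
by rewrite scale0r normr0 mul0r.
Qed.
Lemma normZ (P : V -> Prop) N a x : is_norm_on P N -> P x -> N (a *: x) = `|a| * N x.
Proof. by case=> _ hZ _; apply: hZ. Qed.
Lemma normN (P : V -> Prop) N x : is_norm_on P N -> P x -> N (- x) = N x.
Proof. by move=> hN hx; rewrite -scaleN1r (normZ _ hN hx) normrN normr1 mul1r. Qed.
Lemma norm_ge0 (P : V -> Prop) N x : is_subspace P -> is_norm_on P N -> P x -> 0 <= N x.
Proof.
move=> hP hN hx; have hx' := subN hP hx.
have := (let: And3 _ _ hT := hN in hT) _ _ hx hx'.
rewrite subrr (norm0 hP hN) (normN hN hx) => h.
by rewrite -(pmulr_rge0 _ (ltr0n R 2)) mulr2n mulrDl !mul1r.
Qed.
Lemma norm_sum (P : V -> Prop) N (I : Type) (r : seq I) (Q : pred I) (F : I -> V) :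
  is_subspace P -> is_norm_on P N -> (forall i, Q i -> P (F i)) ->
  N (\sum_(i <- r | Q i) F i) <= \sum_(i <- r | Q i) N (F i).
Proof.
move=> hP hN hF.
suff : P (\sum_(i <- r | Q i) F i) /\ N (\sum_(i <- r | Q i) F i) <= \sum_(i <- r | Q i) N (F i) by case.
elim/big_rec2: _; first by split; [exact: sub0|rewrite (norm0 hP hN)].
move=> i y1 y2 Qi [h1 h2]; split; first by apply: subD => //; apply: hF.
apply: le_trans ((let: And3 _ _ hT := hN in hT) _ _ (hF _ Qi) h1) _.
by rewrite lerD2l.
Qed.
End Gen.
Section Seq.
Variables (R : realType) (V : lmodType R) (l : forall k, ('I_k -> V) -> V) (h1 : V -> V) (u1 : V).

Lemma useqSS k : useq l h1 u1 k.+2 =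
  rcons (useq l h1 u1 k.+1) (unext l h1 (useq l h1 u1 k.+1) k.+2).
Proof. by []. Qed.

Lemma useq_size k : size (useq l h1 u1 k) = k.+1.
Proof. by elim: k => [|[|k] IH] //; rewrite useqSS size_rcons IH. Qed.

Lemma useq_nth k r : (r <= k)%N -> nth 0 (useq l h1 u1 k) r = useqn l h1 u1 r.
Proof.
rewrite /useqn; elim: k r => [|[|k] IH] r hr.
- by move: hr; rewrite leqn0 => /eqP ->.
- by case: r hr => [|[|]].
case: (ltngtP r k.+2) hr => // [hlt _|-> _ //].
by rewrite useqSS nth_rcons useq_size hlt IH.
Qed.

Lemma useqn_rec k : (2 <= k)%N -> useqn l h1 u1 k = unext l h1 (useq l h1 u1 k.-1) k.
Proof.
case: k => [|[|k]] // _; rewrite /useqn useqSS nth_rcons useq_size ltnn eqxx.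
by [].
Qed.

Lemma useq0 : useqn l h1 u1 0 = 0. Proof. by []. Qed.
Lemma useq1 : useqn l h1 u1 1 = u1. Proof. by []. Qed.
End Seq.

Lemma CseqSS k : Cseq k.+2 = rcons (Cseq k.+1) (Cnext (Cseq k.+1) k.+2).
Proof. by []. Qed.

Lemma Cseq_size k : size (Cseq k) = k.+1.
Proof. by elim: k => [|[|k] IH] //; rewrite CseqSS size_rcons IH. Qed.

Lemma Cseq_nth k r : (r <= k)%N -> nth 0%N (Cseq k) r = Cnum r.
Proof.
rewrite /Cnum; elim: k r => [|[|k] IH] r hr.
- by move: hr; rewrite leqn0 => /eqP ->.
- by case: r hr => [|[|]].
case: (ltngtP r k.+2) hr => // [hlt _|-> _ //].
by rewrite CseqSS nth_rcons Cseq_size hlt IH.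
Qed.

Lemma Cnum_rec k : (2 <= k)%N -> Cnum k = Cnext (Cseq k.-1) k.
Proof.
case: k => [|[|k]] // _; rewrite /Cnum CseqSS nth_rcons Cseq_size ltnn eqxx.
by [].
Qed.
Lemma compo_pos m i (r : {ffun 'I_i -> 'I_m.+1}) j : compo r -> (0 < r j)%N.
Proof. by case/andP => /forallP. Qed.

Lemma compo_sum m i (r : {ffun 'I_i -> 'I_m.+1}) : compo r -> (\sum_j (r j : nat))%N = m.
Proof. by case/andP => _ /eqP. Qed.

Lemma compo_sumpred m i (r : {ffun 'I_i -> 'I_m.+1}) : compo r ->
  ((\sum_j (r j).-1) + i)%N = m.
Proof.
move=> hc; have e : (\sum_(j : 'I_i) 1)%N = i by rewrite sum1_card card_ord.
rewrite -[X in (_ + X)%N]e.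
rewrite -big_split /= -[RHS](compo_sum hc).
by apply: eq_bigr => j _; rewrite addn1 prednK // (compo_pos _ hc).
Qed.

Lemma compo_lt m i (r : {ffun 'I_i -> 'I_m.+1}) j : (2 <= i)%N -> compo r -> (r j < m)%N.
Proof.
move=> hi hc; have := compo_sum hc; rewrite (bigD1 j) //= => e.
have : (\sum_(j' | j' != j) 1 <= \sum_(j' | j' != j) (r j' : nat))%N.
  by apply: leq_sum => j' _; apply: (compo_pos _ hc).
rewrite sum1_card cardC1 card_ord.
move=> h; have -> : (r j < m)%N = (r j < r j + \sum_(i0 < i | i0 != j) r i0)%N by rewrite e.
rewrite -[X in (X < _)%N]addn0 ltn_add2l; apply: leq_trans h; by case: (i) hi => [|[|]].
Qed.
Section Jac.
Variables (R : realType) (V : lmodType R) (Vd : int -> V -> Prop) (l : forall k, ('I_k -> V) -> V).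
Hypothesis Hml : forall k (x : 'I_k -> V) (j : 'I_k) (a : R) (y z : V),
        l (upd x j (a *: y + z)) = a *: l (upd x j y) + l (upd x j z).
Hypothesis Hdeg : forall k (d : 'I_k -> int) (x : 'I_k -> V), (forall j, Vd (d j) (x j)) ->
        Vd ((\sum_j d j) + 1) (l x).
Hypothesis Hsym : forall k (d : 'I_k -> int) (x : 'I_k -> V) (s : 'S_k),
        (forall j, Vd (d j) (x j)) ->
        l (fun a => x (s a)) = ksign R s d *: l x.
Hypothesis Hjac : forall n (d : 'I_n.+1 -> int) (x : 'I_n.+1 -> V),
        (forall j, Vd (d j) (x j)) ->
        let xs (s : 'S_n.+1) (m : nat) := x (s (inord m)) in
        \sum_(1 <= i < n.+2)
          \sum_(s : 'S_n.+1 | unshuffle i s)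
            ksign R s d *:
              l (fun a : 'I_(n.+1 - i).+1 =>
                 if (a == 0 :> nat) then l (fun b : 'I_i => xs s b)
                 else xs s (i + a - 1)%N) = 0.

Lemma l_V1 k (x : 'I_k -> V) : (forall j, Vd 0 (x j)) -> Vd 1 (l x).
Proof.
move=> hx; have := Hdeg (d := fun _ => 0) hx.
by rewrite big1 // add0r.
Qed.

Lemma ksign0 k (s : 'S_k) : ksign R s (fun _ => 0) = 1 :> R.
Proof. by rewrite /ksign big1 // => a _; rewrite big1 // => b _; rewrite expr0. Qed.

Lemma zlem m (Hm : m = 0%N) (f : 'I_m.+1 -> V) A :
  (forall a : 'I_m.+1, (a : nat) = 0%N -> f a = A) -> l f = l (fun _ : 'I_1 => A).
Proof.
subst m => H; congr (l _); apply: funext => a; apply: H.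
by case: a => [[|]].
Qed.

Lemma jac_top n (x : 'I_n.+1 -> V) : (forall j, Vd 0 (x j)) ->
  (forall i, (1 <= i <= n)%N -> forall y : 'I_i -> V, (forall j, Vd 0 (y j)) -> l y = 0) ->
  l (fun _ : 'I_1 => l x) = 0.
Proof.
move=> hx IH.
have J := Hjac (d := fun _ => 0) hx; simpl in J.
move: J; rewrite big_nat_recr //= big_nat_cond big1 ?add0r; last first.
  move=> i /andP[/andP[hi1 hin] _]; apply: big1 => s _.
  apply/eqP; rewrite scaler_eq0; apply/orP; right; apply/eqP.
  apply: (l_slot0 Hml (j := ord0)) => /=.
  apply: IH; first by rewrite hi1.
  by move=> j; apply: hx.
rewrite (eq_bigr (fun _ => l (fun _ : 'I_1 => l x))); last first.
  move=> s _; rewrite ksign0 scale1r (zlem (subnn n.+1) (A := l x)) // => a ha.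
  rewrite ha /=.
  have -> : (fun b : 'I_n.+1 => x (s (inord b))) = (fun b => x (s b)).
    by apply: funext => b; rewrite inord_val.
  by rewrite (Hsym (d := fun _ => 0)) // ksign0 scale1r.
rewrite big_const_seq iter_addr_0 => /eqP.
rewrite -scaler_nat scaler_eq0 pnatr_eq0 => /orP[hc|/eqP //]; exfalso.
move: hc; rewrite -leqn0 leqNgt -has_count => /negP; apply; apply/hasP; exists 1%g; first exact: mem_index_enum.
by apply/forallP => a; apply/forallP => b; apply/implyP => /andP[hab _]; rewrite !perm1.
Qed.
End Jac.

Local Open Scope classical_set_scope.
Section Main.
Variables (R : realType) (V : lmodType R) (Vd : int -> V -> Prop) (l : forall k, ('I_k -> V) -> V).
Variables (h1 h2 : {linear V -> V}) (N0 N1 : V -> R) (u1 : V).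
Hypothesis Hsub : forall d, is_subspace (Vd d).
Hypothesis Hml : forall k (x : 'I_k -> V) (j : 'I_k) (a : R) (y z : V),
        l (upd x j (a *: y + z)) = a *: l (upd x j y) + l (upd x j z).
Hypothesis Hdeg : forall k (d : 'I_k -> int) (x : 'I_k -> V), (forall j, Vd (d j) (x j)) ->
        Vd ((\sum_j d j) + 1) (l x).
Hypothesis Hsym : forall k (d : 'I_k -> int) (x : 'I_k -> V) (s : 'S_k),
        (forall j, Vd (d j) (x j)) ->
        l (fun a => x (s a)) = ksign R s d *: l x.
Hypothesis Hjac : forall n (d : 'I_n.+1 -> int) (x : 'I_n.+1 -> V),
        (forall j, Vd (d j) (x j)) ->
        let xs (s : 'S_n.+1) (m : nat) := x (s (inord m)) in
        \sum_(1 <= i < n.+2)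
          \sum_(s : 'S_n.+1 | unshuffle i s)
            ksign R s d *:
              l (fun a : 'I_(n.+1 - i).+1 =>
                 if (a == 0 :> nat) then l (fun b : 'I_i => xs s b)
                 else xs s (i + a - 1)%N) = 0.
Hypothesis Hh1 : forall v, Vd 1 v -> Vd 0 (h1 v).
Hypothesis Hhom : forall v, Vd 1 v -> l (fun _ : 'I_1 => h1 v) + h2 (l (fun _ : 'I_1 => v)) = v.
Hypothesis HN0 : is_norm_on (Vd 0) N0.
Hypothesis HN1 : is_norm_on (Vd 1) N1.
Hypothesis Hu1 : Vd 0 u1.

Lemma unext_V0 (s : seq V) m : (forall r, Vd 0 (nth 0 s r)) -> Vd 0 (unext l h1 s m).
Proof.
move=> hs; apply: subN => //; apply: Hh1; apply: subsum => // i _.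
apply: subsum => // r _; apply: subZ => //; apply: (l_V1 Hdeg) => j; exact: hs.
Qed.

Lemma useq_V0 k r : Vd 0 (nth 0 (useq l h1 u1 k) r).
Proof.
elim: k r => [|[|k] IH] r.
- by case: r => [|r] /=; [apply: sub0|rewrite nth_nil; apply: sub0].
- by case: r => [|[|r]] /=; [apply: sub0|exact: Hu1|rewrite nth_nil; apply: sub0].
rewrite useqSS nth_rcons useq_size; case: ifP => _; first exact: IH.
case: ifP => _; last exact: sub0.
exact: unext_V0.
Qed.

Lemma useqn_V0 k : Vd 0 (useqn l h1 u1 k).
Proof. exact: useq_V0. Qed.

Lemma degenerate : (forall y, Vd 0 y -> l (fun _ : 'I_1 => y) = 0) ->
  forall k, (1 <= k)%N -> forall y : 'I_k -> V, (forall j, Vd 0 (y j)) -> l y = 0.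
Proof.
move=> D; elim/ltn_ind => -[|n] // IH _ y hy.
have hv := l_V1 Hdeg hy.
have J := jac_top Hml Hsym Hjac hy (fun i hi => IH i (let: conj _ h := andP hi in h) (let: conj h _ := andP hi in h)).
have := Hhom hv; rewrite J linear0 addr0 D //; exact: Hh1.
Qed.

Section Inner.
Variables (alpha h : R).
Hypothesis HL : forall i (x : 'I_i -> V), (1 <= i)%N -> (forall j, Vd 0 (x j)) ->
  N1 (l x) <= (i`!)%:R * alpha * \prod_j N0 (x j).
Hypothesis HH : forall v, Vd 1 v -> N0 (h1 v) <= h * N1 v.
Hypothesis Hh0 : 0 <= h.
Hypothesis Halpha : 0 < alpha.

Lemma nondeg y : Vd 0 y -> l (fun _ : 'I_1 => y) != 0 -> 1 <= h * alpha.
Proof.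
move=> hy hw; set w := l (fun _ : 'I_1 => y) in hw.
have hwV : Vd 1 w := l_V1 Hdeg (fun _ => hy).
have J : l (fun _ : 'I_1 => w) = 0.
  apply: (jac_top Hml Hsym Hjac (x := fun _ : 'I_1 => y)) => [j|i /andP[hi1 hi2]]; [exact: hy|lia].
have e : l (fun _ : 'I_1 => h1 w) = w by have := Hhom hwV; rewrite J linear0 addr0.
have n1pos : 0 < N1 w.
  rewrite lt_def (norm_ge0 (Hsub 1) HN1 hwV) andbT; apply/eqP => h0.
  by move/negP: hw; apply; apply/eqP; case: HN1 => H _ _; apply: H.
have := HL (x := fun _ : 'I_1 => h1 w) (leqnn 1) (fun _ => Hh1 hwV).
rewrite e big_ord1 /= mul1r => H1.
have H2 := HH hwV.
rewrite -(ler_pM2r n1pos) mul1r; apply: le_trans H1 _.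
apply: (le_trans (ler_wpM2l (ltW Halpha) H2)).
rewrite le_eqVlt; apply/orP; left; apply/eqP; ring.
Qed.

Hypothesis Hb : 1 <= h * alpha.

Lemma main_bound k : (1 <= k)%N -> N0 (useqn l h1 u1 k) <=
  (k`!)%:R * N0 u1 ^+ k * (h * alpha) ^+ k.-1 * (Cnum k)%:R.
Proof.
set a := N0 u1; set b := h * alpha.
elim/ltn_ind: k => -[|[|k]] // IH _.
  by rewrite useq1 /Cnum /= expr1 expr0 !mulr1 mul1r.
rewrite useqn_rec // /unext (normN HN0); last first.
  apply: Hh1; apply: subsum => // i _; apply: subsum => // r _; apply: subZ => //.
  by apply: (l_V1 Hdeg) => j; apply: useq_V0.
set W := \sum_(2 <= i < k.+3) _.
have hW : Vd 1 W.
  apply: subsum => // i _; apply: subsum => // r _; apply: subZ => //.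
  by apply: (l_V1 Hdeg) => j; apply: useq_V0.
apply: le_trans (HH hW) _.
rewrite Cnum_rec // /Cnext /W.
apply: le_trans (ler_wpM2l Hh0 (norm_sum _ (Hsub 1) HN1 _)) _.
  move=> i _; apply: subsum => // r _; apply: subZ => //.
  by apply: (l_V1 Hdeg) => j; apply: useq_V0.
rewrite mulr_sumr natr_sum mulr_sumr big_nat_cond [X in _ <= X]big_nat_cond.
apply: ler_sum => i /andP[/andP[hi2 hik] _].
apply: le_trans (ler_wpM2l Hh0 (norm_sum _ (Hsub 1) HN1 _)) _.
  move=> r _; apply: subZ => //.
  by apply: (l_V1 Hdeg) => j; apply: useq_V0.
rewrite mulr_sumr natr_sum mulr_sumr.
apply: ler_sum => r hr.
have hrj : forall j, (0 < r j)%N /\ (r j < k.+2)%N.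
  by move=> j; split; [apply: compo_pos hr|apply: compo_lt].
have -> : (fun j => (useq l h1 u1 k.+2.-1)`_(r j)) = (fun j => useqn l h1 u1 (r j)).
  by apply: funext => j; rewrite useq_nth //; case: (hrj j).
have hXV : forall j, Vd 0 (useqn l h1 u1 (r j)) by move=> j; apply: useqn_V0.
set c := _ / _ / _.
have hc : 0 <= c by rewrite /c !divr_ge0.
rewrite (normZ _ HN1 (l_V1 Hdeg hXV)) ger0_norm //.
rewrite natr_prod (eq_bigr (fun j => (Cnum (r j))%:R)); last first.
  by move=> j _; rewrite Cseq_nth //; case: (hrj j).
have HLX := HL (x := fun j => useqn l h1 u1 (r j)) (ltnW hi2) hXV.
have Hprod : \prod_j N0 (useqn l h1 u1 (r j)) <=
   \prod_j ((r j)`!%:R * a ^+ (r j) * b ^+ (r j).-1 * (Cnum (r j))%:R).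
  apply: ler_prod => j _; apply/andP; split; first exact: (norm_ge0 (Hsub 0) HN0).
  by case: (hrj j) => h0 h1'; apply: IH.
have Hq : \prod_j ((r j)`!%:R * a ^+ (r j) * b ^+ (r j).-1 * (Cnum (r j))%:R) =
   (\prod_j ((r j)`!)%:R) * a ^+ k.+2 * b ^+ (k.+2 - i) * \prod_j (Cnum (r j))%:R :> R.
  have e1 : a ^+ (\sum_j (r j : nat)) = a ^+ k.+2 := congr1 _ (compo_sum hr).
  have e2' : (\sum_j (r j).-1 = k.+2 - i)%N .
    by apply/eqP; rewrite -(eqn_add2r i) (compo_sumpred hr) subnK.
  have e2 : b ^+ (\sum_j (r j).-1) = b ^+ (k.+2 - i) := congr1 _ e2'.
  by rewrite !big_split /= !prodrXr e1 e2.
set P := \prod_j ((r j)`!)%:R in Hq.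
set PC := \prod_j (Cnum (r j))%:R in Hq *.
have H3 : N1 (l (fun j : 'I_i => useqn l h1 u1 (r j))) <=
    i`!%:R * alpha * (P * a ^+ k.+2 * b ^+ (k.+2 - i) * PC).
  apply: le_trans HLX _; rewrite -Hq; apply: ler_wpM2l => //.
  by rewrite mulr_ge0 // ltW.
apply: le_trans (ler_wpM2l Hh0 (ler_wpM2l hc H3)) _.
have hP : P != 0.
  by rewrite /P prodf_seq_neq0; apply/allP => j _; rewrite pnatr_eq0 -lt0n fact_gt0.
have hi : (i`!)%:R != 0 :> R by rewrite pnatr_eq0 -lt0n fact_gt0.
have -> : h * (c * (i`!%:R * alpha * (P * a ^+ k.+2 * b ^+ (k.+2 - i) * PC))) =
   ((k.+2)`!%:R * a ^+ k.+2 * PC) * (b * b ^+ (k.+2 - i)).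
  rewrite /c natr_prod -/P /b; field.
  by rewrite hP hi.
have -> : (k.+2)`!%:R * a ^+ k.+2 * b ^+ k.+2.-1 * PC =
   ((k.+2)`!%:R * a ^+ k.+2 * PC) * b ^+ k.+1 by rewrite /=; ring.
apply: ler_wpM2l.
  apply: mulr_ge0; [apply: mulr_ge0 => //; apply: exprn_ge0; exact: (norm_ge0 (Hsub 0) HN0)|].
  by apply: prodr_ge0 => j _.
rewrite -exprS; apply: ler_weXn2l => //; lia.
Qed.
End Inner.

Lemma deg_u : (forall y, Vd 0 y -> l (fun _ : 'I_1 => y) = 0) ->
  forall k, (2 <= k)%N -> useqn l h1 u1 k = 0.
Proof.
move=> D k hk; rewrite useqn_rec // /unext big_nat_cond big1 ?linear0 ?oppr0 //.
move=> i /andP[/andP[hi _] _]; apply: big1 => r _.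
by rewrite (degenerate D (ltnW hi)) ?scaler0 // => j; apply: useq_V0.
Qed.

Lemma zero_u : u1 = 0 -> forall k r, nth 0 (useq l h1 u1 k) r = 0.
Proof.
move=> h0; elim=> [|[|k] IH] r.
- by case: r => [|r] //=; rewrite nth_nil.
- by case: r => [|[|r]] //=; rewrite nth_nil.
rewrite useqSS nth_rcons useq_size; case: ifP => _; first exact: IH.
case: ifP => _ //.
rewrite /unext big_nat_cond big1 ?linear0 ?oppr0 //.
move=> i /andP[/andP[hi _] _]; apply: big1 => r' _.
by rewrite (l_slot0 Hml (j := Ordinal (ltnW hi))) ?scaler0 // IH.
Qed.

Lemma Cnum_ge1 k : (1 <= k)%N -> (1 <= Cnum k)%N.
Proof.
case: k => [|[|k]] // _.
rewrite Cnum_rec // /Cnext big_nat_recr //.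
apply: leq_trans (leq_addl _ _).
pose r0 : {ffun 'I_k.+2 -> 'I_k.+3} := [ffun => inord 1].
have hr0 : compo r0.
  apply/andP; split; first by apply/forallP => j; rewrite ffunE inordK.
  apply/eqP; rewrite (eq_bigr (fun _ => 1%N)); last by move=> j _; rewrite ffunE inordK.
  by rewrite sum1_card card_ord.
rewrite (bigD1 r0) //; apply: leq_trans (leq_addr _ _).
by rewrite big1 // => j _; rewrite ffunE inordK // Cseq_nth.
Qed.

Lemma opl_ge0 i : (1 <= i)%N -> (0 <= opnorm_l Vd N0 N1 l i)%E.
Proof.
move=> hi.
have H : [set (N1 (l x))%:E | x in [set x : 'I_i -> V | forall j, Vd 0 (x j) /\ N0 (x j) <= 1]]
    (N1 (l (fun _ : 'I_i => 0)))%:E.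
  by exists (fun _ => 0) => // j; split; [exact: sub0 | rewrite (norm0 (Hsub 0) HN0)].
have := ereal_sup_ubound H.
by rewrite (l_slot0 Hml (j := Ordinal hi)) // (norm0 (Hsub 1) HN1).
Qed.

Lemma series_term alpha
  (Hs : (\sum_(1 <= i <oo) (opnorm_l Vd N0 N1 l i * ((i`!)%:R^-1)%:E) <= alpha%:E)%E) i :
  (1 <= i)%N -> (opnorm_l Vd N0 N1 l i * ((i`!)%:R^-1)%:E <= alpha%:E)%E.
Proof.
move=> hi.
have nn : forall n, (1 <= n)%N -> true -> (0 <= opnorm_l Vd N0 N1 l n * ((n`!)%:R^-1)%:E)%E.
  by move=> n hn _; apply: mule_ge0; [exact: opl_ge0|rewrite lee_fin invr_ge0].
apply: le_trans Hs.
apply: le_trans (nneseries_lim_ge i.+1 nn).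
rewrite big_nat_recr //=; apply: lee_paddl => //.
by rewrite big_nat_cond; apply: sume_ge0 => n /andP[/andP[hn _] _]; apply: nn.
Qed.

Lemma opl_elt alpha i (y : 'I_i -> V) :
  (opnorm_l Vd N0 N1 l i * ((i`!)%:R^-1)%:E <= alpha%:E)%E ->
  (forall j, Vd 0 (y j) /\ N0 (y j) <= 1) -> N1 (l y) <= alpha * (i`!)%:R.
Proof.
move=> Ht hy.
have H : [set (N1 (l x))%:E | x in [set x : 'I_i -> V | forall j, Vd 0 (x j) /\ N0 (x j) <= 1]]
    (N1 (l y))%:E by exists y.
have H1 := ereal_sup_ubound H.
have hc : (0 <= ((i`!)%:R^-1 : R)%:E)%E by rewrite lee_fin invr_ge0.
have := le_trans (lee_wpmul2r hc H1) Ht.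
by rewrite -EFinM lee_fin ler_pdivrMr // ltr0n fact_gt0.
Qed.

Lemma opl_bound alpha
  (Hs : (\sum_(1 <= i <oo) (opnorm_l Vd N0 N1 l i * ((i`!)%:R^-1)%:E) <= alpha%:E)%E)
  (Halpha : 0 < alpha) i (x : 'I_i -> V) : (1 <= i)%N -> (forall j, Vd 0 (x j)) ->
  N1 (l x) <= (i`!)%:R * alpha * \prod_j N0 (x j).
Proof.
move=> hi hx.
have Ht := series_term Hs hi.
have hN0 : forall j, 0 <= N0 (x j) by move=> j; exact: (norm_ge0 (Hsub 0) HN0).
case: (pselect (exists j, N0 (x j) = 0)) => [[j0 hj0]|hnz].
  have hx0 : x j0 = 0 by case: HN0 => H _ _; apply: H.
  rewrite (l_slot0 Hml hx0) (norm0 (Hsub 1) HN1).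
  by rewrite mulr_ge0 ?prodr_ge0 // mulr_ge0 // ltW.
have hpos : forall j, 0 < N0 (x j).
  move=> j; rewrite lt_def hN0 andbT; apply/eqP => e; apply: hnz; by exists j.
set y := fun j => (N0 (x j))^-1 *: x j.
have hy : forall j, Vd 0 (y j) /\ N0 (y j) <= 1.
  move=> j; split; first exact: subZ.
  by rewrite /y (normZ _ HN0 (hx j)) ger0_norm ?invr_ge0 // mulVf // gt_eqF.
have := opl_elt Ht hy.
rewrite /y (l_scale Hml) (normZ _ HN1 (l_V1 Hdeg hx)) ger0_norm; last first.
  by apply: prodr_ge0 => j _; rewrite invr_ge0.
have hP : 0 < \prod_j N0 (x j) by apply: prodr_gt0 => j _.
rewrite prodfV ler_pdivrMl // => H.
by apply: le_trans H _; rewrite le_eqVlt; apply/orP; left; apply/eqP; ring.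
Qed.

Lemma oph_bound h : opnorm_h Vd N0 N1 h1 = h%:E ->
  forall v, Vd 1 v -> N0 (h1 v) <= h * N1 v.
Proof.
move=> eh v hv.
have hub : forall w, Vd 1 w -> N1 w <= 1 -> N0 (h1 w) <= h.
  move=> w hw hw1; rewrite -lee_fin -eh; apply: ereal_sup_ubound; by exists w.
case: (pselect (N1 v = 0)) => [e|hne].
  have -> : v = 0 by case: HN1 => H _ _; apply: H.
  rewrite linear0 (norm0 (Hsub 0) HN0) (norm0 (Hsub 1) HN1) mulr0.
  exact: lexx.
have hpos : 0 < N1 v by rewrite lt_def (norm_ge0 (Hsub 1) HN1 hv) andbT; apply/eqP.
have := hub ((N1 v)^-1 *: v) (subZ _ (Hsub 1) hv).
rewrite (normZ _ HN1 hv) ger0_norm ?invr_ge0 ?(ltW hpos) // mulVf ?gt_eqF // => /(_ (lexx _)).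
rewrite linearZ /= (normZ _ HN0 (Hh1 hv)) ger0_norm ?invr_ge0 ?(ltW hpos) //.
by rewrite ler_pdivrMl // mulrC.
Qed.

Lemma expey n : ((+oo : \bar R) ^+ n.+1 = +oo)%E.
Proof. by elim: n => [|n IH] //; rewrite expeS IH mulyy. Qed.

Lemma final alpha (Halpha : 0 < alpha)
  (Hs : (\sum_(1 <= i <oo) (opnorm_l Vd N0 N1 l i * ((i`!)%:R^-1)%:E) <= alpha%:E)%E)
  k : (1 <= k)%N ->
    ((N0 (useqn l h1 u1 k) / (k`!)%:R)%:E
      <= (N0 u1 ^+ k)%:E * (opnorm_h Vd N0 N1 h1 * alpha%:E) ^+ (k - 1)
         * ((Cnum k)%:R)%:E)%E.
Proof.
case: k => [|[|k]] // _.
  rewrite useq1 subnn expe0 mule1 expr1 /=.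
  have -> : Cnum 1 = 1%N by [].
  by rewrite divr1 mule1.
have H0 : (0 <= opnorm_h Vd N0 N1 h1)%E.
  have H : [set (N0 (h1 v))%:E | v in [set v | Vd 1 v /\ N1 v <= 1]] (N0 (h1 0))%:E.
    by exists 0 => //; split; [exact: sub0|rewrite (norm0 (Hsub 1) HN1)].
  have := ereal_sup_ubound H.
  by rewrite linear0 (norm0 (Hsub 0) HN0).
have rhs_ge0 : (0 <= (N0 u1 ^+ k.+2)%:E * (opnorm_h Vd N0 N1 h1 * alpha%:E) ^+ (k.+2 - 1)
         * ((Cnum k.+2)%:R)%:E)%E.
  apply: mule_ge0; last by rewrite lee_fin ler0n.
  apply: mule_ge0; first by rewrite lee_fin exprn_ge0 // (norm_ge0 (Hsub 0) HN0).
  by apply: expe_ge0; apply: mule_ge0 => //; rewrite lee_fin ltW.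
have HL := opl_bound Hs Halpha.
case Hh : (opnorm_h Vd N0 N1 h1) H0 rhs_ge0 => [r| |] H0 rhs_ge0.
- have HH := oph_bound Hh.
  have Hr : 0 <= r by rewrite -lee_fin.
  case: (pselect (forall y, Vd 0 y -> l (fun _ : 'I_1 => y) = 0)) => D.
    by rewrite (deg_u D) // (norm0 (Hsub 0) HN0) mul0r.
  move/existsNP: D => [y /not_implyP [hy /eqP hl]].
  have Hb : 1 <= r * alpha := nondeg (alpha := alpha) (h := r) HL HH Hr Halpha hy hl.
  have mb : N0 (useqn l h1 u1 k.+2) <=
     (k.+2`!)%:R * N0 u1 ^+ k.+2 * (r * alpha) ^+ k.+2.-1 * (Cnum k.+2)%:R.
    by apply: (main_bound (alpha := alpha) (h := r)).
  rewrite -EFinM -EFin_expe -!EFinM lee_fin ler_pdivrMr ?ltr0n ?fact_gt0 //.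
  apply: le_trans mb _; rewrite subn1 /=.
  by rewrite le_eqVlt; apply/orP; left; apply/eqP; ring.
- case: (pselect (N0 u1 = 0)) => [e|hne].
    have u0 : u1 = 0 by case: HN0 => H _ _; apply: H.
    by rewrite /useqn (zero_u u0) (norm0 (Hsub 0) HN0) mul0r.
  have hpos : 0 < N0 u1 by rewrite lt_def (norm_ge0 (Hsub 0) HN0 Hu1) andbT; apply/eqP.
  have -> : (k.+2 - 1 = k.+1)%N by [].
  rewrite mulyr gtr0_sg // mul1e expey mulry gtr0_sg ?exprn_gt0 // mul1e.
  by rewrite mulyr gtr0_sg ?mul1e ?leey // ltr0n Cnum_ge1.
- by move: H0; rewrite leeNy_eq.
Qed.

End Main.

Local Close Scope classical_set_scope.
Unset Implicit Arguments.

Theorem lemma5p14 (R : realType) (V : lmodType R) (Vd : int -> V -> Prop)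
    (l : forall k, ('I_k -> V) -> V) (n : nat)
    (h1 h2 : {linear V -> V}) (N0 N1 : V -> R) (u1 : V) (alpha : R) :
  graded_fd Vd ->
  is_Linfty Vd l ->
  is_Rn (Vd 0) n ->
  (forall v, Vd 1 v -> Vd 0 (h1 v)) ->
  (forall v, Vd 2 v -> Vd 1 (h2 v)) ->
  (forall v, Vd 1 v -> l 1 (fun _ => h1 v) + h2 (l 1 (fun _ => v)) = v) ->
  is_norm_on (Vd 0) N0 ->
  is_norm_on (Vd 1) N1 ->
  Vd 0 u1 -> l 1 (fun _ => u1) = 0 ->
  0 < alpha ->
  (\sum_(1 <= i <oo) (opnorm_l Vd N0 N1 l i * ((i`!)%:R^-1)%:E)
     <= alpha%:E)%E ->
  forall k : nat, (1 <= k)%N ->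
    ((N0 (useqn l h1 u1 k) / (k`!)%:R)%:E
      <= (N0 u1 ^+ k)%:E * (opnorm_h Vd N0 N1 h1 * alpha%:E) ^+ (k - 1)
         * ((Cnum k)%:R)%:E)%E.
Proof.
move=> [Hsub _ _ _] [Hml Hdeg Hsym _ Hjac] _ Hh1 _ Hhom HN0 HN1 Hu1 _ Halpha Hs k hk.
by apply: (final (h2 := h2)) => //.
Qed.
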